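(* Let $r\ge1$, $a,b,q$ be nonnegative integers and $p$ a real number with $0\le p\le b$, $0\le q\le a$, $a-q=r(b-p)$, and $a$ and $b$ not both zero. Let $P\subset\mathbb{R}^2$ be the closed (possibly degenerate) pentagon with vertices $(0,0),(0,a),(p,a),(b,q),(b,0)$. Call a sequence $(c_1,\dots,c_a)$ of nonnegative integers a parking function in $P$ if its nondecreasing rearrangement $s_1\le s_2\le\cdots\le s_a$ is the left-area sequence of some lattice path from $(0,a)$ to $(b,0)$ with unit steps $(0,-1)$ and $(1,0)$ contained in $P$, where the left-area sequence of such a path is $(s_1,\dots,s_a)$ with $s_i$ the $x$-coordinate of the down step going from height $a-i+1$ to height $a-i$. Define $G(a,b,p,r,q)$ recursively by $$G(a,b,p,r,q)=\begin{cases}(b+1)^a & \text{if } p=b \ (\text{equivalently } q=a,\ P\text{ a rectangle or segment}),\\[4pt] \displaystyle\sum_{w=0}^{q} b^{a-q+w}\binom{a}{q-w} & \text{else if } a-q\le r,\\[4pt] \displaystyle\sum_{w=0}^{q}(\lfloor p\rfloor+1)^{a-w}(b-\lfloor p\rfloor)^{w}\binom{a}{w}+\sum_{t=q+1}^{q+(b-\lfloor p\rfloor-1)r}(\lfloor p\rfloor+1)^{a-t}\binom{a}{t}\,G(\xi_t) & \text{otherwise,}\end{cases}$$ where $\xi_t=\big(t,\ b-\lfloor p\rfloor-1,\ b-\lfloor p\rfloor-\tfrac{t-q}{r}-1,\ r,\ q\big)$. Then the number of parking functions in $P$ equals $G(a,b,p,r,q)$.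
   Context: The pentagon $P$ has a slanted side from $(p,a)$ to $(b,q)$ along which the height drops by $r$ for each unit of horizontal displacement; $\lfloor p\rfloor$ denotes the integer part of $p$. *)

(* Defs.v *)
From Stdlib Require Import Reals ZArith.
From mathcomp Require Import all_boot.

Set Implicit Arguments.
Unset Strict Implicit.
Unset Printing Implicit Defensive.

(* integer part of a (nonnegative) real: Int_part x = up x - 1 = floor x *)
Definition fl (p : R) : nat := Z.to_nat (Int_part p).

(* The closed pentagon P with vertices (0,0),(0,a),(p,a),(b,q),(b,0),
   the slanted side having slope -r:
   P = { (x,y) | 0 <= x <= b, 0 <= y <= a, y <= a - r (x - p) }.
   (Nonnegativity is automatic for lattice points with nat coordinates.) *)
Definition in_P (a b : nat) (p : R) (r : nat) (x y : nat) : Prop :=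
  Rle (INR x) (INR b) /\ Rle (INR y) (INR a) /\
  Rle (INR y) (Rminus (INR a) (Rmult (INR r) (Rminus (INR x) p))).

(* A lattice path from (0,a) to (b,0) is a word of steps:
   true = down step (0,-1), false = right step (1,0). *)
Definition is_path (a b : nat) (s : seq bool) : Prop :=
  count id s = a /\ count negb s = b.

Definition path_pt (a : nat) (s : seq bool) (k : nat) : nat * nat :=
  (count negb (take k s), a - count id (take k s)).

(* the path is contained in P: every lattice point visited lies in P
   (equivalent to containment of the whole polygonal path, P being convex) *)
Definition path_in_P (a b : nat) (p : R) (r : nat) (s : seq bool) : Prop :=
  is_path a b s /\
  forall k, (k <= size s)%N -> in_P a b p r (path_pt a s k).1 (path_pt a s k).2.

Fixpoint left_area_from (x : nat) (s : seq bool) : seq nat :=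
  match s with
  | [::] => [::]
  | true :: s' => x :: left_area_from x s'
  | false :: s' => left_area_from x.+1 s'
  end.

Definition left_area (s : seq bool) : seq nat := left_area_from 0 s.

Definition parking_in_P (a b : nat) (p : R) (r : nat) (c : seq nat) : Prop :=
  size c = a /\
  exists s : seq bool, path_in_P a b p r s /\ sort leq c = left_area s.

(* G(a,b,p,r,q), defined by recursion on b (fuel argument, which is always
   large enough when started at b.+1, since the recursive calls have
   b' = b - floor p - 1 < b) *)
Fixpoint G_fuel (n : nat) (a b : nat) (p : R) (r q : nat) : nat :=
  match n with
  | 0 => 0
  | n'.+1 =>
    if Req_EM_T p (INR b) then (b + 1) ^ a
    else if (a - q <= r)%N then
      \sum_(0 <= w < q.+1) b ^ (a - q + w) * 'C(a, q - w)
    else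
      let f := fl p in
      \sum_(0 <= w < q.+1) (f + 1) ^ (a - w) * (b - f) ^ w * 'C(a, w)
      + \sum_(q.+1 <= t < (q + (b - f - 1) * r).+1)
          (f + 1) ^ (a - t) * 'C(a, t) *
          G_fuel n' t (b - f - 1)
                 (Rminus (INR (b - f - 1)) (Rdiv (INR (t - q)) (INR r))) r q
  end.

Definition G (a b : nat) (p : R) (r q : nat) : nat := G_fuel b.+1 a b p r q.

(* Main.v *)
Require Import Defs.
From Stdlib Require Import Reals Lra Lia ZArith.
From mathcomp Require Import all_boot zify.

Set Implicit Arguments.
Unset Strict Implicit.
Unset Printing Implicit Defensive.
Delimit Scope R_scope with Re.


Fixpoint allseq (a b : nat) : seq (seq nat) :=
  if a is a'.+1 then [seq x :: s | x <- iota 0 b.+1, s <- allseq a' b]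
  else [:: [::]].

Arguments allseq : simpl never.

Lemma allseqS a b : allseq a.+1 b = [seq x :: s | x <- iota 0 b.+1, s <- allseq a b].
Proof. by rewrite /allseq. Qed.

Lemma count_allpairs_cons (P : pred (seq nat)) (s : seq nat) (t : seq (seq nat)) :
  count P [seq x :: y | x <- s, y <- t] = \sum_(x <- s) count (fun y => P (x :: y)) t.
Proof.
elim: s => [|x s IH]; first by rewrite big_nil.
by rewrite allpairs_cons count_cat IH big_cons count_map.
Qed.

Lemma count_allseqS (P : pred (seq nat)) a b :
  count P (allseq a.+1 b) = \sum_(x <- iota 0 b.+1) count (fun y => P (x :: y)) (allseq a b).
Proof. by rewrite allseqS -count_allpairs_cons. Qed.



Lemma mem_allseq a b c : (c \in allseq a b) = (size c == a) && all (fun y => y <= b) c.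
Proof.
elim: a c => [|a IH] c.
  case: c => [|y c] //.
rewrite allseqS; apply/allpairsP/idP.
- case=> [[x s]] [Hx Hs ->].
  rewrite mem_iota in Hx; rewrite IH in Hs; move: Hx Hs => /= Hx /andP[/eqP -> ->].
  move: Hx; rewrite add0n ltnS => ->; by rewrite eqxx.
- case: c => [|y c] //= /andP[/eqP [Hs]] /andP[Hy Hc].
  exists (y, c); split => //; first by change (y \in iota 0 b.+1); rewrite mem_iota add0n ltnS.
  by rewrite IH Hs eqxx.
Qed.

Lemma allseq_uniq a b : uniq (allseq a b).
Proof.
elim: a => [|a IH] //; rewrite allseqS.
apply: allpairs_uniq => //; first exact: iota_uniq.
by move=> [x s] [y t] _ _ /= [-> ->].
Qed.

Lemma size_allseq a b : size (allseq a b) = b.+1 ^ a.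
Proof.
elim: a => [|a IH] //; rewrite allseqS.
by rewrite size_allpairs size_iota IH expnS.
Qed.


Definition hi (m : nat) (c : seq nat) : seq nat := map (subn^~ m) (filter (leq m) c).

Lemma decomp m b' a (Q : pred (seq nat)) :
  count (fun c => Q (hi m c)) (allseq a (m + b')) =
  \sum_(t < a.+1) 'C(a, t) * m ^ (a - t) * count Q (allseq t b').
Proof.
elim: a Q => [|a IH] Q.
  by rewrite big_ord1 /= bin0 expn0 !mul1n.
rewrite count_allseqS -addnS iotaD big_cat /= add0n.
have E1 : \sum_(x <- iota 0 m) count (fun y => Q (hi m (x :: y))) (allseq a (m + b'))
   = m * \sum_(t < a.+1) 'C(a, t) * m ^ (a - t) * count Q (allseq t b').
  rewrite -IH -(subn0 m) -sum_nat_const_nat subn0 /index_iota subn0.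
  apply: eq_big_seq => x; rewrite mem_iota add0n => /andP[_ Hx].
  apply: eq_count => y; by rewrite /hi /= leqNgt Hx.
have E2 : \sum_(x <- iota m b'.+1) count (fun y => Q (hi m (x :: y))) (allseq a (m + b'))
   = \sum_(t < a.+1) 'C(a, t) * m ^ (a - t) * count Q (allseq t.+1 b').
  rewrite -[m in iota m _]addn0 iotaDl big_map.
  under eq_bigr => y _.
    have -> : count (fun s => Q (hi m ((m + y) :: s))) (allseq a (m + b'))
       = count (fun c => (fun d => Q (y :: d)) (hi m c)) (allseq a (m + b')).
      apply: eq_count => s; by rewrite /hi /= leq_addr /= addKn.
    rewrite (IH (fun d => Q (y :: d))).
  over.
  rewrite exchange_big /=; apply: eq_bigr => t _.
  by rewrite -big_distrr /= count_allseqS.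
rewrite E1 E2 {E1 E2}.
set T := fun t => count Q (allseq t b').
rewrite [in RHS]big_ord_recl /= bin0 mul1n subn0.
under [in RHS]eq_bigr => i _ do rewrite /bump /= add1n binS mulnDl mulnDl subSS.
rewrite big_split /= [in RHS]addnA; congr (_ + _).
rewrite big_ord_recl /= bin0 mul1n subn0 mulnDr mulnA -expnS; congr (_ + _).
rewrite [in RHS]big_ord_recr /= bin_small // !mul0n addn0 big_distrr /=.
apply: eq_bigr => i _; rewrite /bump /= add1n.
have Hi := ltn_ord i.
have -> : a - i = (a - i.+1).+1 by lia.
by rewrite expnS !mulnA [m * _]mulnC.
Qed.


Lemma INR_subn n m : (m <= n)%N -> INR (n - m) = (INR n - INR m)%Re.
Proof. move=> H; apply: minus_INR; apply/leP; exact: H. Qed.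
Lemma INR_addn n m : INR (n + m) = (INR n + INR m)%Re.
Proof. exact: plus_INR. Qed.
Lemma INR_muln n m : INR (n * m) = (INR n * INR m)%Re.
Proof. exact: mult_INR. Qed.
Lemma INR_leq n m : (n <= m)%N -> (INR n <= INR m)%Re.
Proof. move=> H; apply: le_INR; apply/leP; exact: H. Qed.
Lemma INR_leq_inv n m : (INR n <= INR m)%Re -> (n <= m)%N.
Proof. move=> H; apply/leP; exact: INR_le. Qed.
Lemma INR_ltn_inv n m : (INR n < INR m)%Re -> (n < m)%N.
Proof. move=> H; apply/ltP; exact: INR_lt. Qed.

Definition Nlt (x : nat) (c : seq nat) : nat := count (fun y => y < x) c.

Definition Rleb (u v : R) : bool := if Rle_dec u v then true else false.
Lemma RlebP u v : Rleb u v <-> (u <= v)%Re.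
Proof. rewrite /Rleb; case: Rle_dec => //. Qed.

Definition validb (b : nat) (p : R) (r : nat) (c : seq nat) : bool :=
  all (fun x => Rleb (INR r * (INR x - p)) (INR (Nlt x c))) (iota 0 b.+1).

Lemma validP b p r c :
  validb b p r c <-> (forall x, (x <= b)%N -> (INR r * (INR x - p) <= INR (Nlt x c))%Re).
Proof.
split.
- move=> /allP H x Hx; apply/RlebP; apply: H; by rewrite mem_iota add0n ltnS.
- move=> H; apply/allP => x; rewrite mem_iota add0n ltnS => Hx; apply/RlebP; exact: H.
Qed.

Definition Qb (a m : nat) (p : R) (r b' : nat) (d : seq nat) : bool :=
  all (fun x => Rleb (INR r * (INR (x + m) - p)) (INR (a - size d + Nlt x d))) (iota 0 b'.+1).

Lemma QbP a m p r b' d :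
  Qb a m p r b' d <-> (forall x, (x <= b')%N ->
      (INR r * (INR (x + m) - p) <= INR (a - size d + Nlt x d))%Re).
Proof.
split.
- move=> /allP H x Hx; apply/RlebP; apply: H; by rewrite mem_iota add0n ltnS.
- move=> H; apply/allP => x; rewrite mem_iota add0n ltnS => Hx; apply/RlebP; exact: H.
Qed.

Lemma Nlt_split m x c : Nlt (x + m) c = Nlt m c + Nlt x (hi m c).
Proof.
rewrite /Nlt /hi; elim: c => [|y c IH] //=.
case: (leqP m y) => Hy /=.
  have -> : (y < x + m) = (y - m < x) by lia.
  rewrite IH; case: (y < m) => //=; lia.
have -> : (y < x + m) = true by lia.
rewrite IH; lia.
Qed.

Lemma size_split m c : size c = Nlt m c + size (hi m c).
Proof.
rewrite /Nlt /hi size_map; elim: c => [|y c IH] //=.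
case: (leqP m y) => Hy /=; rewrite IH; lia.
Qed.

Lemma split_valid a m b' p r c :
  (INR m - 1 <= p)%Re -> size c = a ->
  validb (m + b') p r c = Qb a m p r b' (hi m c).
Proof.
move=> Hm Hs.
apply/idP/idP.
- move/validP => H; apply/QbP => x Hx.
  have := H (x + m) ltac:(lia).
  by rewrite Nlt_split {1}(size_split m c) in Hs *; rewrite -Hs addnK.
- move/QbP => H; apply/validP => x Hx.
  case: (leqP m x) => Hxm.
    have := H (x - m) ltac:(lia).
    rewrite (subnK Hxm) -Hs {1}(size_split m c) addnK -Nlt_split subnK //.
  have Hr := pos_INR r; have Hn := pos_INR (Nlt x c).
  have : (INR x <= INR m - 1)%Re.
    have := INR_leq Hxm; rewrite S_INR; lra.
  move=> Hx'; nra.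
Qed.

Lemma count_valid_decomp a m b' p r :
  (INR m - 1 <= p)%Re ->
  count (validb (m + b') p r) (allseq a (m + b')) =
  \sum_(t < a.+1) 'C(a, t) * m ^ (a - t) * count (Qb a m p r b') (allseq t b').
Proof.
move=> Hm; rewrite -decomp; apply: eq_in_count => c.
rewrite mem_allseq => /andP[/eqP Hs _]; exact: split_valid.
Qed.




Lemma gen_split a m b' q p r :
  (1 <= r)%N -> (INR m - 1 <= p)%Re -> (p < INR m)%Re -> (q <= a)%N ->
  (INR a - INR q = INR r * (INR (m + b') - p))%Re ->
  count (validb (m + b') p r) (allseq a (m + b')) =
  \sum_(0 <= t < q.+1) 'C(a, t) * m ^ (a - t) * b'.+1 ^ t +
  \sum_(q.+1 <= t < (q + b' * r).+1) 'C(a, t) * m ^ (a - t) *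
      count (validb b' (INR b' - INR (t - q) / INR r) r) (allseq t b').
Proof.
move=> Hr Hm1 Hm2 Hqa Heq.
have Rr : (1 <= INR r)%Re by have := INR_leq Hr.
have Hb : (INR (q + b' * r) < INR a)%Re.
  rewrite INR_addn in Heq; rewrite INR_addn INR_muln; nra.
have Hba : (q + b' * r < a)%N by apply: INR_ltn_inv.
rewrite count_valid_decomp // -(big_mkord xpredT (fun t => 'C(a, t) * m ^ (a - t) * count (Qb a m p r b') (allseq t b'))).
rewrite (big_cat_nat (n := q.+1)) /=; [|done|lia].
rewrite (big_cat_nat (n := (q + b' * r).+1) (m := q.+1)) /=; [|lia|lia].
congr (_ + _).
  apply: eq_big_nat => t /andP[_ Ht]; congr (_ * _).
  rewrite -(size_allseq t b') -count_predT; apply: eq_in_count => d.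
  rewrite mem_allseq => /andP[/eqP Hd Hall]; apply/QbP => x Hx.
  rewrite Hd (INR_addn (a - t)) INR_subn; last by lia.
  have := pos_INR (Nlt x d).
  have := INR_leq (n := t) (m := q) ltac:(lia).
  have := INR_leq (n := x + m) (m := m + b') ltac:(lia).
  rewrite !INR_addn in Heq *; nra.
rewrite [X in _ + X]big1_seq ?addn0; last first.
  move=> t; rewrite mem_index_iota => /andP[_ /andP[Ht1 Ht2]].
  apply/eqP; rewrite muln_eq0; apply/orP; right; apply/eqP.
  rewrite (@eq_in_count _ _ pred0) ?count_pred0 ?muln0 //.
  move=> d; rewrite mem_allseq => /andP[/eqP Hd _] /=.
  apply/negbTE/negP => /QbP H; have := H 0%N ltac:(lia).
  have -> : Nlt 0 d = 0%N by rewrite /Nlt; elim: (d) => //.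
  rewrite add0n addn0 Hd INR_subn; last by lia.
  have H1 := INR_leq (n := (q + b' * r).+1) (m := t) Ht1.
  rewrite S_INR INR_addn INR_muln in H1; rewrite INR_addn in Heq.
  nra.
apply: eq_big_nat => t /andP[Ht1 Ht2]; congr (_ * _).
apply: eq_in_count => d; rewrite mem_allseq => /andP[/eqP Hd _].
have Rr0 : INR r <> 0%Re by lra.
have E : forall x, (INR r * (INR (x + m) - p) - (INR a - INR t) =
    INR r * (INR x - (INR b' - INR (t - q) / INR r)))%Re.
  move=> x; rewrite INR_subn; last by lia.
  have -> : (INR r * (INR x - (INR b' - (INR t - INR q) / INR r)) =
     INR r * INR x - INR r * INR b' + (INR t - INR q))%Re by field.
  rewrite !INR_addn in Heq *; lra.
apply/idP/idP.
- move/QbP => H; apply/validP => x Hx; have := H x Hx.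
  rewrite Hd (INR_addn (a - t)) (INR_subn (n := a) (m := t)); last by lia.
  have := E x; lra.
- move/validP => H; apply/QbP => x Hx; have := H x Hx.
  rewrite Hd (INR_addn (a - t)) (INR_subn (n := a) (m := t)); last by lia.
  have := E x; lra.
Qed.


Lemma fl_bounds p : (0 <= p)%Re -> (INR (fl p) <= p < INR (fl p) + 1)%Re.
Proof.
move=> Hp; have [H1 H2] := base_Int_part p.
have Hz : (0 <= Int_part p)%Z.
  have : (-1 < IZR (Int_part p))%Re by lra.
  change (-1)%Re with (IZR (-1)); move/lt_IZR; lia.
have E : INR (fl p) = IZR (Int_part p).
  by rewrite /fl INR_IZR_INZ Z2Nat.id.
rewrite E; lra.
Qed.

Lemma countG r n : (1 <= r)%N -> forall a b q p, (b < n)%N -> (0 <= p)%Re -> (p <= INR b)%Re ->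
  (q <= a)%N -> (INR a - INR q = INR r * (INR b - p))%Re ->
  count (validb b p r) (allseq a b) = G_fuel n a b p r q.
Proof.
move=> Hr; elim: n => [|n IH] a b q p Hbn Hp0 Hpb Hqa Heq; first by [].
have Rr : (1 <= INR r)%Re by have := INR_leq Hr.
cbn [G_fuel].
case: Req_EM_T => [Epb|Npb].
  rewrite addn1 -(size_allseq a b) -count_predT; apply: eq_in_count => c _.
  apply/validP => x Hx; have := INR_leq Hx; have := pos_INR (Nlt x c); nra.
have Hpb' : (p < INR b)%Re by lra.
case: ifP => Har.
  have Hb0 : (0 < b)%N.
    case: b Hbn Hpb Npb Hpb' {Heq} => // _ /= H1 H2; lra.
  have Hm1 : (INR b - 1 <= p)%Re.
    have := INR_leq Har; rewrite INR_subn // => H; nra.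
  have := gen_split (a := a) (m := b) (b' := 0) (q := q) (p := p) (r := r) Hr Hm1 Hpb' Hqa.
  rewrite addn0 => -> //.
  rewrite mul0n (@big_geq _ _ _ q.+1 (q + 0).+1); last by rewrite addn0.
  rewrite [X in _ = X]big_nat_rev /= addn0.
  apply: eq_big_nat => i /andP[_ Hi].
  rewrite exp1n muln1 mulnC; congr (_ * _); first by f_equal; lia.
  have -> : q - (0 + q.+1 - i.+1) = i by lia.
  done.
have [Hf1 Hf2] := fl_bounds Hp0.
set f := fl p in Hf1 Hf2 *.
have Hfb : (f < b)%N by apply: INR_ltn_inv; lra.
have Hb : b = (f + 1) + (b - f - 1) by lia.
have Hm1' : (INR (f + 1) - 1 <= p)%Re by rewrite INR_addn /=; lra.
have Hm2' : (p < INR (f + 1))%Re by rewrite INR_addn /=; lra.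
have := gen_split (a := a) (m := f + 1) (b' := b - f - 1) (q := q) (p := p) (r := r) Hr Hm1' Hm2' Hqa.
rewrite -Hb => -> //.
congr (_ + _).
  apply: eq_big_nat => w _.
  have -> : (b - f - 1).+1 = b - f by lia.
  by rewrite [RHS]mulnC mulnA.
apply: eq_big_nat => t /andP[Ht1 Ht2].
rewrite [_ * 'C(a, t)]mulnC; congr (_ * _).
have Rr0 : INR r <> 0%Re by lra.
have Hu : (INR r * (INR (t - q) / INR r) = INR (t - q))%Re by field.
have Hu0 := pos_INR (t - q).
have Hu1 := INR_leq (n := t - q) (m := (b - f - 1) * r) ltac:(lia).
rewrite INR_muln in Hu1.
apply: IH; first by lia.
- nra.
- nra.
- lia.
- rewrite -(INR_subn (n := t) (m := q)); last by lia.
  rewrite -{1}Hu; ring.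
Qed.


Lemma count_sort' (P : pred nat) c : count P (sort leq c) = count P c.
Proof. have H : perm_eq (sort leq c) c by rewrite perm_sort perm_refl. by move/permP: H. Qed.

Lemma count_take_le (P : pred bool) s k : count P (take k s) <= count P s.
Proof. by rewrite -{2}(cat_take_drop k s) count_cat leq_addr. Qed.

Lemma size_laf x s : size (left_area_from x s) = count id s.
Proof. by elim: s x => [|[] s IH] x //=; rewrite IH. Qed.

Lemma laf_ge x s : all (fun y => x <= y) (left_area_from x s).
Proof.
elim: s x => [|[] s IH] x //=; first by rewrite leqnn IH.
apply: sub_all (IH x.+1) => y /=; exact: ltnW.
Qed.

Lemma laf_le x s : all (fun y => y <= x + count negb s) (left_area_from x s).
Proof.
elim: s x => [|[] s IH] x //=.
  by rewrite leq_addr /=.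
by rewrite add1n addnS -addSn; exact: IH.
Qed.

Lemma laf_count_le x s k :
  count (fun y => y < x + count negb (take k s)) (left_area_from x s) <= count id (take k s).
Proof.
elim: s x k => [|b s IH] x k.
  by case: k.
case: k => [|k].
  rewrite take0 /= addn0 leqn0 -/(nilp _) ; apply/eqP.
  apply/eqP; rewrite eqn0Ngt -has_count; apply/negP => /hasP [y Hy].
  by move: (allP (laf_ge x (b :: s)) y Hy) => /= Hxy; rewrite ltnNge Hxy.
case: b => /=.
  rewrite add0n; apply: leq_add; [by case: (_ < _) | exact: IH].
by rewrite ?add0n add1n addnS -addSn; exact: IH.
Qed.

Lemma laf_exists x s z : z <= count negb s -> exists k, k <= size s /\
  count negb (take k s) = z /\
  count (fun y => y < x + z) (left_area_from x s) = count id (take k s).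
Proof.
elim: s x z => [|b s IH] x z Hz.
  exists 0; move: Hz => /=; rewrite leqn0 => /eqP ->; by [].
case: z Hz => [|z] Hz.
  exists 0; split => //; split => //; rewrite take0 /= addn0.
  apply/eqP; rewrite eqn0Ngt -has_count; apply/negP => /hasP [y Hy].
  by move: (allP (laf_ge x (b :: s)) y Hy) => /= Hxy; rewrite ltnNge Hxy.
case: b Hz => /= Hz.
  have [k [Hk [H1 H2]]] := IH x z.+1 Hz.
  exists k.+1; split; first by []; split; first by rewrite /= H1.
  rewrite /= H2; have -> : (x < x + z.+1) = true by lia.
  by [].
have [k [Hk [H1 H2]]] := IH x.+1 z Hz.
exists k.+1; rewrite /= H1 -H2; split; first by []. split; first by lia. by rewrite addSnnS.
Qed.


Fixpoint build (b x : nat) (l : seq nat) : seq bool :=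
  match l with
  | [::] => nseq (b - x) false
  | y :: l' => nseq (y - x) false ++ true :: build b y l'
  end.

Lemma laf_nseq x n s : left_area_from x (nseq n false ++ s) = left_area_from (x + n) s.
Proof. by elim: n x => [|n IH] x /=; rewrite ?addn0 // IH addSnnS. Qed.

Lemma laf_build b x l : sorted leq l -> all (leq x) l -> left_area_from x (build b x l) = l.
Proof.
elim: l x => [|y l IH] x //=.
  by have := laf_nseq x (b - x) [::]; rewrite cats0 => ->.
move=> Hs /andP[Hxy Hl].
rewrite laf_nseq subnKC //= IH //; first exact: path_sorted Hs.
exact: order_path_min leq_trans Hs.
Qed.

Lemma count_build_id b x l : count id (build b x l) = size l.
Proof.
elim: l x => [|y l IH] x /=; first by rewrite count_nseq mul0n.
by rewrite count_cat count_nseq mul0n /= IH.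
Qed.

Lemma count_build_negb b x l : sorted leq l -> all (leq x) l -> all (fun y => y <= b) l -> x <= b ->
  count negb (build b x l) = b - x.
Proof.
elim: l x => [|y l IH] x /=; first by rewrite count_nseq mul1n.
move=> Hs /andP[Hxy Hl] /andP[Hyb Hlb] Hxb.
rewrite count_cat count_nseq mul1n /= IH //.
- lia.
- exact: path_sorted Hs.
- exact: order_path_min leq_trans Hs.
Qed.

Lemma parkingP a b p r c :
  parking_in_P a b p r c <-> c \in filter (validb b p r) (allseq a b).
Proof.
rewrite mem_filter mem_allseq; split.
- move=> [Hc [s [[[Ha Hb] Hin] Hsort]]].
  have Hall : all (fun y => y <= b) c.
    apply/allP => y Hy.
    have : y \in left_area s by rewrite -Hsort mem_sort.
    move/(allP (laf_le 0 s)); by rewrite add0n Hb.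
  rewrite Hc eqxx Hall !andbT.
  apply/validP => x Hx.
  have [k [Hk [H1 H2]]] := laf_exists 0 (s := s) (z := x) ltac:(by rewrite Hb).
  have [_ [_ H3]] := Hin k Hk.
  move: H3; rewrite /path_pt /= H1.
  have HD : count id (take k s) <= a by rewrite -Ha count_take_le.
  rewrite INR_subn // /Nlt -(count_sort' _ c) Hsort /left_area -H2 add0n.
  lra.
- move=> /andP[Hv /andP[/eqP Hc Hall]].
  split => //.
  set l := sort leq c.
  have Hsl : sorted leq l by exact: sort_sorted leq_total c.
  have Hl0 : all (leq 0) l by apply/allP.
  have Hlb : all (fun y => y <= b) l by rewrite all_sort.
  exists (build b 0 l); split; last by rewrite /left_area laf_build.
  have Ha : count id (build b 0 l) = a by rewrite count_build_id size_sort.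
  have Hb : count negb (build b 0 l) = b by rewrite count_build_negb // subn0.
  split; first by [].
  move=> k Hk; rewrite /path_pt /in_P /=.
  set s := build b 0 l.
  have HX : count negb (take k s) <= b by rewrite -Hb count_take_le.
  have HD : count id (take k s) <= a by rewrite -Ha count_take_le.
  have := laf_count_le 0 s k; rewrite add0n -/(left_area s) /left_area laf_build // => Hle.
  move/validP: Hv => /(_ _ HX).
  rewrite /Nlt -(count_sort' _ c) -/l => Hv.
  have Hle' := INR_leq Hle.
  split; first exact: INR_leq.
  rewrite INR_subn //; split.
    have := pos_INR (count id (take k s)); lra.
  lra.
Qed.


Theorem mainTheorem2 (a b q r : nat) (p : R) :
  (1 <= r)%N ->
  Rle 0 p -> Rle p (INR b) ->
  (q <= a)%N ->
  Rminus (INR a) (INR q) = Rmult (INR r) (Rminus (INR b) p) ->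
  (0 < a + b)%N ->
  exists L : seq (seq nat),
    uniq L /\
    (forall c : seq nat, c \in L <-> parking_in_P a b p r c) /\
    size L = G a b p r q.
Proof.
move=> Hr Hp0 Hpb Hqa Heq _.
exists (filter (validb b p r) (allseq a b)); split.
  exact: filter_uniq (allseq_uniq a b).
split.
  move=> c; symmetry; exact: parkingP.
rewrite size_filter /G; exact: countG.
Qed.
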